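(* Let $s>0$, $Y>0$ with $\frac sY<\frac13$, let $x_+(\tau)=\frac sYe^{s\tau}$, $\tau^*=\frac1s\ln\left(\frac Y{3s}\right)>0$, and (so that the coexistence equilibrium $E_+=(x_+(\tau),1-x_+(\tau))$ exists) consider $\tau\in[0,\tau^*]$. Define \[ \omega_+(\tau)=\sqrt{\tfrac12\left(-x_+(\tau)^2+\sqrt{x_+(\tau)^4+s^2\left(12x_+(\tau)^2-16x_+(\tau)+4\right)}\right)}, \] \[ h_1(\omega,\tau)=\frac{\omega}{s}\cdot\frac{s+x_+(\tau)-s\,x_+(\tau)-2x_+(\tau)^2-\omega^2}{(1-2x_+(\tau))^2+\omega^2},\qquad h_2(\omega,\tau)=\frac{\omega^2(1+s-x_+(\tau))-(1-2x_+(\tau))s\,x_+(\tau)}{s\left((1-2x_+(\tau))^2+\omega^2\right)}. \] Then: \begin{enumerate} \item For $\tau\in[0,\tau^*]$, $h_1(\omega_+(\tau),\tau)^2+h_2(\omega_+(\tau),\tau)^2=1$. \item $h_1(\omega_+(\tau^* ),\tau^* )=0$, and $h_1(\omega_+(\tau),\tau)>0$ for $0\leq\tau<\tau^*$. \item $h_2(\omega_+(\tau^* ),\tau^* )=-1$, and $-1<h_2(\omega_+(\tau),\tau)<1$ for $0\leq\tau<\tau^*$. \end{enumerate} *)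

(* Defs.v *)
From Stdlib Require Import Reals.
Open Scope R_scope.

Definition xplus (s Y tau : R) : R := (s / Y) * exp (s * tau).

Definition tau_star (s Y : R) : R := (1 / s) * ln (Y / (3 * s)).

Definition omega_plus (s Y tau : R) : R :=
  let x := xplus s Y tau in
  sqrt ((1/2) * (- x ^ 2 + sqrt (x ^ 4 + s ^ 2 * (12 * x ^ 2 - 16 * x + 4)))).

Definition h1 (s Y w tau : R) : R :=
  let x := xplus s Y tau in
  (w / s) * ((s + x - s * x - 2 * x ^ 2 - w ^ 2) / ((1 - 2 * x) ^ 2 + w ^ 2)).

Definition h2 (s Y w tau : R) : R :=
  let x := xplus s Y tau in
  (w ^ 2 * (1 + s - x) - (1 - 2 * x) * s * x) / (s * ((1 - 2 * x) ^ 2 + w ^ 2)).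

(* Main.v *)
Require Import Defs.
From Stdlib Require Import Reals Lra Psatz.
Open Scope R_scope.

Lemma idt x s W :
 W*(s+x-s*x-2*x^2 - W)^2+(W*(1+s-x)-(1-2*x)*s*x)^2-s^2*((1-2*x)^2+W)^2 = (W + (-2*(s+x-s*x-2*x^2) + (1+s-x)^2 - s^2 - x^2))*(W^2+x^2*W-s^2*(1-3*x)*(1-x)).
Proof. ring. Qed.

Definition Vof (x s : R) := (1/2) * (- x ^ 2 + sqrt (x ^ 4 + s ^ 2 * (12 * x ^ 2 - 16 * x + 4))).

Lemma Vprops x s : 0 < s -> 0 < x <= 1/3 ->
  0 <= Vof x s /\ Vof x s ^ 2 + x^2 * Vof x s - s^2*(1-3*x)*(1-x) = 0 /\
  (x < 1/3 -> 0 < Vof x s).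
Proof.
  intros hs hx. unfold Vof.
  assert (Hc : 0 <= s ^ 2 * (12 * x ^ 2 - 16 * x + 4)).
  { apply Rmult_le_pos; [nra|]. assert (0 <= (1-3*x)*(1-x)) by (apply Rmult_le_pos; lra); nra. }
  assert (Ha : 0 <= x ^ 4 + s ^ 2 * (12 * x ^ 2 - 16 * x + 4)) by nra.
  pose proof (sqrt_pos (x ^ 4 + s ^ 2 * (12 * x ^ 2 - 16 * x + 4))) as Hr.
  pose proof (sqrt_sqrt _ Ha) as Hr2.
  set (r := sqrt (x ^ 4 + s ^ 2 * (12 * x ^ 2 - 16 * x + 4))) in *.
  assert (x^2 <= r).
  { destruct (Rle_or_lt (x^2) r) as [h|h]; [exact h|]. exfalso.
    assert (r*r < x^2*x^2) by (apply Rmult_le_0_lt_compat; lra). nra. }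
  split; [nra|split; [nra|]].
  intros hlt. assert (0 < s ^ 2 * (12 * x ^ 2 - 16 * x + 4)).
  { apply Rmult_lt_0_compat; nra. }
  assert (x^2 < r) by nra. nra.
Qed.

Lemma omega_eq s Y tau : omega_plus s Y tau = sqrt (Vof (xplus s Y tau) s).
Proof. reflexivity. Qed.

Lemma main_x x s w : 0 < s -> 0 < x <= 1/3 -> w = sqrt (Vof x s) ->
  let H1 := (w / s) * ((s + x - s * x - 2 * x ^ 2 - w ^ 2) / ((1 - 2 * x) ^ 2 + w ^ 2)) in
  let H2 := (w ^ 2 * (1 + s - x) - (1 - 2 * x) * s * x) / (s * ((1 - 2 * x) ^ 2 + w ^ 2)) in
  H1 ^ 2 + H2 ^ 2 = 1 /\ (x < 1/3 -> 0 < H1).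
Proof.
  intros hs hx hw H1 H2.
  destruct (Vprops x s hs hx) as [V0 [Vrel Vpos]].
  set (V := Vof x s) in *.
  assert (Hw2 : w ^ 2 = V) by (rewrite hw; simpl; rewrite Rmult_1_r; apply sqrt_sqrt; lra).
  assert (HD : 0 < (1 - 2 * x) ^ 2 + V) by nra.
  unfold H1, H2. rewrite Hw2. split.
  - assert (E : V*(s+x-s*x-2*x^2 - V)^2+(V*(1+s-x)-(1-2*x)*s*x)^2-s^2*((1-2*x)^2+V)^2 = 0)
      by (rewrite idt, Vrel; ring).
    replace ((w / s * ((s + x - s * x - 2 * x ^ 2 - V) / ((1 - 2 * x) ^ 2 + V))) ^ 2)
      with (w ^ 2 * (s + x - s * x - 2 * x ^ 2 - V) ^ 2 / (s ^ 2 * ((1 - 2 * x) ^ 2 + V) ^ 2))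
      by (field; lra).
    rewrite Hw2. field_simplify_eq; [|lra]. apply Rminus_diag_uniq. rewrite <- E. ring.
  - intros hlt. specialize (Vpos hlt).
    assert (0 < w) by (rewrite hw; apply sqrt_lt_R0; lra).
    assert (0 < s + x - s * x - 2 * x ^ 2 - V).
    { set (A := s + x - s * x - 2 * x ^ 2).
      assert (0 < A) by (unfold A; nra).
      destruct (Rlt_or_le V A) as [h|h]; [lra|].
      exfalso. assert (A^2 + x^2*A <= V^2 + x^2*V) by nra.
      assert (HsA : 0 <= s*(1-x) <= A) by (unfold A; split; nra).
      assert (s^2*(1-x)^2 <= A^2) by (assert (s*(1-x)*(s*(1-x)) <= A*A) by (apply Rmult_le_compat; lra); nra).
      assert (0 < s^2*(1-x)*(2*x)) by (apply Rmult_lt_0_compat; [apply Rmult_lt_0_compat|]; nra).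
      nra. }
    apply Rmult_lt_0_compat; [apply Rdiv_lt_0_compat; lra|].
    apply Rdiv_lt_0_compat; lra.
Qed.

Lemma at_star x s w : 0 < s -> x = 1/3 -> w = sqrt (Vof x s) ->
  (w / s) * ((s + x - s * x - 2 * x ^ 2 - w ^ 2) / ((1 - 2 * x) ^ 2 + w ^ 2)) = 0 /\
  (w ^ 2 * (1 + s - x) - (1 - 2 * x) * s * x) / (s * ((1 - 2 * x) ^ 2 + w ^ 2)) = -1.
Proof.
  intros hs hx hw.
  destruct (Vprops x s hs ltac:(lra)) as [V0 [Vrel _]].
  assert (HV : Vof x s = 0).
  { subst x. nra. }
  rewrite HV, sqrt_0 in hw. subst w x. split.
  - unfold Rdiv. ring.
  - field. lra.
Qed.

Theorem lemmaA1 (s Y : R) (hs : 0 < s) (hY : 0 < Y) (hsY : s / Y < 1 / 3) :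
  (forall tau : R, 0 <= tau <= tau_star s Y ->
     h1 s Y (omega_plus s Y tau) tau ^ 2 + h2 s Y (omega_plus s Y tau) tau ^ 2 = 1) /\
  (h1 s Y (omega_plus s Y (tau_star s Y)) (tau_star s Y) = 0 /\
   forall tau : R, 0 <= tau < tau_star s Y -> 0 < h1 s Y (omega_plus s Y tau) tau) /\
  (h2 s Y (omega_plus s Y (tau_star s Y)) (tau_star s Y) = -1 /\
   forall tau : R, 0 <= tau < tau_star s Y ->
     -1 < h2 s Y (omega_plus s Y tau) tau < 1).
Proof.
  assert (Hq : 0 < Y / (3 * s)) by (apply Rdiv_lt_0_compat; lra).
  assert (Hst : s * tau_star s Y = ln (Y / (3 * s))) by (unfold tau_star; field; lra).
  assert (Hxs : xplus s Y (tau_star s Y) = 1/3).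
  { unfold xplus. rewrite Hst, exp_ln by exact Hq. field. lra. }
  assert (Hpos : forall tau, 0 < xplus s Y tau).
  { intro tau. unfold xplus. apply Rmult_lt_0_compat;
      [apply Rdiv_lt_0_compat; lra | apply exp_pos]. }
  assert (Hle : forall tau, tau <= tau_star s Y -> xplus s Y tau <= 1/3).
  { intros tau h. rewrite <- Hxs. unfold xplus.
    apply Rmult_le_compat_l; [apply Rlt_le, Rdiv_lt_0_compat; lra|].
    apply exp_le_3 || (destruct (Rle_lt_or_eq_dec _ _ h) as [h'|h'];
      [apply Rlt_le, exp_increasing; nra | subst; lra]). }
  assert (Hlt : forall tau, tau < tau_star s Y -> xplus s Y tau < 1/3).
  { intros tau h. rewrite <- Hxs. unfold xplus.
    apply Rmult_lt_compat_l; [apply Rdiv_lt_0_compat; lra|].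
    apply exp_increasing; nra. }
  assert (M : forall tau, tau <= tau_star s Y ->
    h1 s Y (omega_plus s Y tau) tau ^ 2 + h2 s Y (omega_plus s Y tau) tau ^ 2 = 1 /\
    (tau < tau_star s Y -> 0 < h1 s Y (omega_plus s Y tau) tau)).
  { intros tau h.
    assert (hx : 0 < xplus s Y tau <= 1/3) by (split; [apply Hpos|apply Hle; lra]).
    destruct (main_x (xplus s Y tau) s (omega_plus s Y tau) hs hx (omega_eq s Y tau))
      as [A B].
    split; [exact A|]. intro h'. apply B. apply Hlt; exact h'. }
  destruct (at_star (xplus s Y (tau_star s Y)) s (omega_plus s Y (tau_star s Y)) hs Hxs
      (omega_eq s Y _)) as [S1 S2].
  split; [intros tau h; apply (M tau); lra|].
  split; [split; [exact S1| intros tau h; apply (M tau); lra]|].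
  split; [exact S2|].
  intros tau h. destruct (M tau ltac:(lra)) as [A B]. specialize (B ltac:(lra)).
  unfold h1, h2 in *. nra.
Qed.
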